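(* Let $\mathcal B=(\mathcal L,\mathcal Q)$ be a quadratic factor on $G=\mathbb{F}_p^n$ of complexity $(\ell,q)$ and rank $r$. Let $k\ge0$ and let $S\subseteq G$ be a set of size $k$ such that the family $\mathcal L\cup\{Mw:M\in\mathcal Q,w\in S\}$ is linearly independent. Then $$\big|\{x\in G:\ \mathcal L\cup\{Mw:M\in\mathcal Q,w\in S\}\cup\{Mx:M\in\mathcal Q\}\text{ is not linearly independent}\}\big|\le p^{n+\ell+(k+1)q-r}.$$
   Context: $p$ is an odd prime. A linear factor of complexity $\ell\ge1$ is a linearly independent set $\mathcal L=\{r_1,\dots,r_\ell\}\subseteq\mathbb{F}_p^n$ ($\emptyset$ if $\ell=0$); a purely quadratic factor of complexity $q\ge1$ is a set $\mathcal Q=\{M_1,\dots,M_q\}$ of pairwise distinct symmetric $n\times n$ matrices over $\mathbb{F}_p$ ($\emptyset$ if $q=0$), with rank $n$ if $q=0$ and otherwise $\min\{\mathrm{rk}(\sum_i\lambda_iM_i):(\lambda_i)\ne0\}$. A quadratic factor of complexity $(\ell,q)$ is a pair $(\mathcal L,\mathcal Q)$; its rank is the rank of $\mathcal Q$. ''Linearly independent'' refers to the family (list) of vectors, so repeated or zero vectors count as a dependence. *)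

(* Defs.v *)
From HB Require Import structures.
From mathcomp Require Import all_boot all_order all_algebra all_fingroup all_field.
Set Implicit Arguments. Unset Strict Implicit. Unset Printing Implicit Defensive.
Import GRing.Theory.
Local Open Scope ring_scope.

(* Linear independence of a family (list) of vectors is [free s] from
   vector.v (\dim <<s>> == size s), so repeated or zero vectors count as
   a dependence. *)

Definition symmetric_mx (F : fieldType) (n : nat) (M : 'M[F]_n) : bool :=
  M^T == M.

Definition linear_factor (F : fieldType) (n l : nat) (L : seq 'cV[F]_n) : Prop :=
  size L = l /\ free L.

Definition purely_quadratic_factor (F : fieldType) (n q : nat)
    (Q : seq 'M[F]_n) : Prop :=
  [/\ size Q = q, uniq Q & all (@symmetric_mx F n) Q].

Definition qf_rank (F : finFieldType) (n : nat) (Q : seq 'M[F]_n) : nat :=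
  if Q is [::] then n
  else \big[minn/n]_(lam : {ffun 'I_(size Q) -> F} | lam != 0)
         \rank (\sum_(i < size Q) lam i *: Q`_i)%R.

Definition QS_family (F : fieldType) (n : nat) (Q : seq 'M[F]_n)
    (S : seq 'cV[F]_n) : seq 'cV[F]_n :=
  [seq M *m w | M <- Q, w <- S].

(* Main.v *)
Require Import Defs.
From HB Require Import structures.
From mathcomp Require Import all_boot all_order all_algebra all_fingroup all_field.
From mathcomp Require Import zify.
Set Implicit Arguments. Unset Strict Implicit. Unset Printing Implicit Defensive.
Import GRing.Theory.
Local Open Scope ring_scope.

Lemma card_bigcup_le (T I : finType) (P : pred I) (G : I -> {set T}) :
  (#|\bigcup_(i | P i) G i| <= \sum_(i | P i) #|G i|)%N.
Proof.
elim/big_rec2: _ => [|i X k _ H]; first by rewrite cards0.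
apply: leq_trans (leq_card_setU _ _).1 _; by rewrite leq_add2l.
Qed.

Lemma count_sub (F : finFieldType) N (K : 'M[F]_N) :
  (#|[set u : 'rV[F]_N | (u <= K)%MS]| <= #|F| ^ \rank K)%N.
Proof.
apply: leq_trans (_ : #|[set w *m row_base K | w in [set: 'rV_(\rank K)]]| <= _)%N.
  apply: subset_leq_card; apply/subsetP => u; rewrite inE => uK.
  have : (u <= row_base K)%MS by rewrite eq_row_base.
  by case/submxP => w ->; apply: imset_f; rewrite inE.
by apply: leq_trans (leq_imset_card _ _) _; rewrite cardsT card_mx mul1n.
Qed.

Lemma count_P (F : finFieldType) n (A : 'M[F]_n) (s : seq 'cV[F]_n) :
  (#|[set x : 'cV[F]_n | A *m x \in <<s>>%VS]| <= #|F| ^ (n + size s - \rank A))%N.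
Proof.
pose B : 'M[F]_(n, size s) := \matrix_(i < n, j < size s) s`_j i 0.
pose C := col_mx A^T B^T.
apply: leq_trans (_ : #|[set (lsubmx z)^T | z in [set z : 'rV_(n + size s) | (z <= kermx C)%MS]]| <= _)%N.
  apply: subset_leq_card; apply/subsetP => x; rewrite inE => Hx.
  have Hv : A *m x \in span (in_tuple s) by [].
  have Ev := coord_span Hv.
  pose y : 'rV_(size s) := \row_j coord (in_tuple s) j (A *m x).
  apply/imsetP; exists (row_mx x^T (- y)); last by rewrite row_mxKl trmxK.
  rewrite inE sub_kermx mul_row_col mulNmx -!trmx_mul.
  have -> : y *m B^T = (A *m x)^T.
    rewrite -[y]trmxK -trmx_mul; congr (_^T).
    rewrite [RHS]Ev; apply/matrixP => i k; rewrite !mxE summxE.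
    apply: eq_bigr => j _; rewrite !mxE (ord1 k) mulrC; done.
  by rewrite subrr.
apply: leq_trans (leq_imset_card _ _) _.
apply: leq_trans (count_sub _) _.
rewrite leq_pexp2l; last first.
  rewrite mxrank_ker leq_sub2l // -(mxrank_tr A) mxrankS //.
  by rewrite -addsmxE addsmxSl.
by apply/card_gt0P; exists 0.
by [].
Qed.

Lemma key (F : finFieldType) n (Q : seq 'M[F]_n) (s1 : seq 'cV[F]_n) x :
  free s1 -> ~~ free (s1 ++ [seq M *m x | M <- Q]) ->
  exists c : {ffun 'I_(size Q) -> F},
    (c != 0) && ((\sum_(i < size Q) c i *: Q`_i) *m x \in <<s1>>%VS).
Proof.
move=> fs1 nf.
suff : [exists c : {ffun 'I_(size Q) -> F},
    (c != 0) && ((\sum_(i < size Q) c i *: Q`_i) *m x \in <<s1>>%VS)].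
  by case/existsP => c Hc; exists c.
apply: contraR nf => /existsPn H.
have H' : forall c : {ffun 'I_(size Q) -> F}, c != 0 ->
    (\sum_(i < size Q) c i *: Q`_i) *m x \notin <<s1>>%VS.
  move=> c cn0; apply/negP => Hc; move: (H c); by rewrite cn0 Hc.
pose T := map_tuple (fun M => M *m x) (in_tuple Q).
have ET : forall c : 'I_(size Q) -> F,
    (\sum_(i < size Q) c i *: Q`_i) *m x = \sum_(i < size Q) c i *: T`_i.
  move=> c; rewrite mulmx_suml; apply: eq_bigr => i _.
  by rewrite -scalemxAl /= (nth_map 0).
rewrite cat_free fs1 /=; apply/andP; split.
  have : free T; last by [].
  apply/freeP => k Hk i.
  pose c : {ffun 'I_(size Q) -> F} := [ffun j => k j].
  have [c0|cn0] := eqVneq c 0.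
    by move/ffunP: c0 => /(_ i); rewrite !ffunE.
  have := H' c cn0.
  by rewrite (ET c) (eq_bigr (fun j => k j *: T`_j)) ?Hk ?mem0v // => j _; rewrite ffunE.
apply/directv_addP; apply/eqP; rewrite -subv0; apply/subvP => v /memv_capP [v1 v2].
have v2' : v \in span T by [].
have Ev := coord_span v2'.
pose c : {ffun 'I_(size Q) -> F} := [ffun j => coord T j v].
have [c0|cn0] := eqVneq c 0.
  rewrite memv0 Ev; apply/eqP; apply: big1 => i _.
  by move/ffunP: c0 => /(_ i); rewrite !ffunE => ->; rewrite scale0r.
have := H' c cn0.
rewrite (ET c) (eq_bigr (fun j => coord T j v *: T`_j)) -?Ev ?v1 //.
by move=> j _; rewrite ffunE.
Qed.

Lemma bigmin_le_seq (T : eqType) (r : seq T) (P : pred T) (G : T -> nat) m x :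
  x \in r -> P x -> (\big[minn/m]_(i <- r | P i) G i <= G x)%N.
Proof.
elim: r => [|a r IH] //= xin Px; rewrite big_cons.
move: xin; rewrite inE => /orP[/eqP <-|xr]; first by rewrite Px geq_minl.
case: (P a); last exact: IH.
by rewrite geq_min IH ?orbT.
Qed.

Lemma qf_rank_le (F : finFieldType) n (Q : seq 'M[F]_n)
  (c : {ffun 'I_(size Q) -> F}) : c != 0 ->
  (qf_rank Q <= \rank (\sum_(i < size Q) c i *: Q`_i)%R)%N.
Proof.
rewrite /qf_rank; case: Q c => [|M Q'] c cn0.
  by case/eqP: cn0; apply/ffunP => -[].
have := @bigmin_le_seq _ (index_enum {ffun 'I_(size (M :: Q')) -> F}) (fun lam => lam != 0) (fun lam => \rank (\sum_(i < size (M :: Q')) lam i *: (M :: Q')`_i)%R) n c (mem_index_enum c) cn0.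
exact.
Qed.

Lemma qf_rank_len (F : finFieldType) n (Q : seq 'M[F]_n) : (qf_rank Q <= n)%N.
Proof.
rewrite /qf_rank; case: Q => [|M Q'] //.
elim/big_ind: _ => // [a b Ha Hb|lam _]; [by rewrite geq_min Ha | exact: rank_leq_col].
Qed.

Theorem mainTheorem8 (p : nat) (hp : prime p) (hodd : odd p)
    (n l q k : nat) (L : seq 'cV['F_p]_n) (Q : seq 'M['F_p]_n)
    (S : seq 'cV['F_p]_n) :
  linear_factor l L ->
  purely_quadratic_factor q Q ->
  uniq S -> size S = k ->
  free (L ++ QS_family Q S) ->
  (#|[set x : 'cV['F_p]_n |
       ~~ free (L ++ QS_family Q S ++ [seq M *m x | M <- Q])]|
    <= p ^ (n + l + k.+1 * q - qf_rank Q))%N.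
Proof.
move=> [szL fL] [szQ _ _] _ szS fs1.
set s1 := L ++ QS_family Q S.
pose A := fun c : {ffun 'I_(size Q) -> 'F_p} => \sum_(i < size Q) c i *: Q`_i.
pose U := \bigcup_(c : {ffun 'I_(size Q) -> 'F_p} | c != 0) [set x : 'cV['F_p]_n | A c *m x \in <<s1>>%VS].
apply: (@leq_trans #|U|).
  apply: subset_leq_card; apply/subsetP => x; rewrite inE catA.
  case/(key fs1) => c /andP[cn0 Hc]; apply/bigcupP; exists c => //; by rewrite inE.
apply: leq_trans (card_bigcup_le _ _) _.
apply: (@leq_trans (\sum_(c : {ffun 'I_(size Q) -> 'F_p}) p ^ (n + size s1 - qf_rank Q))).
  rewrite [X in (_ <= X)%N](bigID (fun c => c != 0)) /=; apply: leq_trans (leq_addr _ _).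
  apply: leq_sum => c cn0; apply: leq_trans (count_P _ _) _.
  by rewrite card_Fp // leq_pexp2l ?prime_gt0 // leq_sub2l // qf_rank_le.
rewrite sum_nat_const card_ffun card_Fp // card_ord.
rewrite -expnD leq_pexp2l ?prime_gt0 //.
have := qf_rank_len Q.
rewrite /s1 /QS_family size_cat size_allpairs szL szQ szS.
lia.
Qed.
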